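(* Let $(G,r)$ be a symmetric group, $r(a,b)=({}^ab,a^b)$, with associated left brace $(G,+,\cdot)$. (1) If $(G,r)$ satisfies lri, then the brace satisfies Raut, and $({}^{({}^va)}u)({}^av)=({}^au)({}^{(a^u)}v)$ for all $a,u,v\in G$. (2) Suppose $G=G(X,r_0)$ and $r=r_G$ is the associated symmetric group of a non-degenerate symmetric set $(X,r_0)$ satisfying lri. If the brace $(G,+,\cdot)$ satisfies Raut, then $(G,r)$ satisfies lri. Consequently, for such $(X,r_0)$, $(G,r_G)$ satisfies lri if and only if $(G,+,\cdot)$ satisfies Raut.
   Context: A symmetric set is a pair $(X,r)$, $X$ nonempty, $r(x,y)=({}^xy,x^y)$ a non-degenerate, involutive bijection of $X\times X$ satisfying $r^{12}r^{23}r^{12}=r^{23}r^{12}r^{23}$ on $X^3$. Condition lri on $(X,r)$: $({}^xy)^x=y={}^x(y^x)$ for all $x,y\in X$. $G(X,r_0)$ is the group generated by $X$ with relations $xy=zt$ whenever $r_0(x,y)=(z,t)$. A symmetric group is $(G,r)$, $G$ a group, $r(u,v)=({}^uv,u^v)$ an involutive bijection of $G\times G$ with ${}^a1=1,{}^1u=u,1^u=1,a^1=a$, ${}^{ab}u={}^a({}^bu)$, $a^{uv}=(a^u)^v$, ${}^a(uv)=({}^au)({}^{a^u}v)$, $(ab)^u=(a^{{}^bu})(b^u)$, $uv=({}^uv)(u^v)$; the associated symmetric group of $(X,r_0)$ is $G(X,r_0)$ with the unique such braiding $r_G$ extending $r_0$. The associated left brace has $a+b:=a({}^{a^{-1}}b)$.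 Condition Raut on the brace: $(a+b)^c=a^c+b^c$ for all $a,b,c\in G$. Condition lri on $(G,r)$: $({}^ab)^a=b={}^a(b^a)$ for all $a,b\in G$. *)

(* Defs.v *)
Set Implicit Arguments.

Definition bij {A B : Type} (f : A -> B) : Prop :=
  exists g : B -> A, (forall x, g (f x) = x) /\ (forall y, f (g y) = y).

Record IsGroup {G : Type} (mul : G -> G -> G) (one : G) (inv : G -> G) : Prop := {
  g_assoc : forall a b c, mul a (mul b c) = mul (mul a b) c;
  g_mul1l : forall a, mul one a = a;
  g_mul1r : forall a, mul a one = a;
  g_mulVl : forall a, mul (inv a) a = one;
  g_mulVr : forall a, mul a (inv a) = one }.

Record Grp := {
  gcar :> Type;
  gmul : gcar -> gcar -> gcar;
  gone : gcar;
  ginv : gcar -> gcar;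
  gax : IsGroup gmul gone ginv }.

Arguments gmul {g} _ _.
Arguments gone {g}.
Arguments ginv {g} _.

Definition is_hom {G H : Grp} (phi : G -> H) : Prop :=
  forall a b : G, phi (gmul a b) = gmul (phi a) (phi b).

(** A map r(a,b) = (l a b, rr a b) given by its two components:
    l a b = {}^a b  and  rr a b = a^b. *)
Definition pairmap {X : Type} (l rr : X -> X -> X) (p : X * X) : X * X :=
  (l (fst p) (snd p), rr (fst p) (snd p)).

Definition r12 {X : Type} (r : X * X -> X * X) (p : X * X * X) : X * X * X :=
  let '(a, b, c) := p in let '(a', b') := r (a, b) in (a', b', c).
Definition r23 {X : Type} (r : X * X -> X * X) (p : X * X * X) : X * X * X :=
  let '(a, b, c) := p in let '(b', c') := r (b, c) in (a, b', c').

Definition IsSymSet {X : Type} (l rr : X -> X -> X) : Prop :=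
  inhabited X /\
  bij (pairmap l rr) /\
  (forall p, pairmap l rr (pairmap l rr p) = p) /\
  (forall x, bij (l x)) /\ (forall y, bij (fun x => rr x y)) /\
  (forall p, r12 (pairmap l rr) (r23 (pairmap l rr) (r12 (pairmap l rr) p))
           = r23 (pairmap l rr) (r12 (pairmap l rr) (r23 (pairmap l rr) p))).

Definition lri {X : Type} (l rr : X -> X -> X) : Prop :=
  forall x y, rr (l x y) x = y /\ l x (rr y x) = y.

Definition IsSymGroup {G : Grp} (l rr : G -> G -> G) : Prop :=
  bij (pairmap l rr) /\
  (forall p, pairmap l rr (pairmap l rr p) = p) /\
  (forall a : G, l a gone = gone) /\
  (forall u : G, l gone u = u) /\
  (forall u : G, rr gone u = gone) /\
  (forall a : G, rr a gone = a) /\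
  (forall a b u : G, l (gmul a b) u = l a (l b u)) /\
  (forall a u v : G, rr a (gmul u v) = rr (rr a u) v) /\
  (forall a u v : G, l a (gmul u v) = gmul (l a u) (l (rr a u) v)) /\
  (forall a b u : G, rr (gmul a b) u = gmul (rr a (l b u)) (rr b u)) /\
  (forall u v : G, gmul u v = gmul (l u v) (rr u v)).

Definition brace_add {G : Grp} (l : G -> G -> G) (a b : G) : G :=
  gmul a (l (ginv a) b).

Definition Raut {G : Grp} (l rr : G -> G -> G) : Prop :=
  forall a b c : G, rr (brace_add l a b) c = brace_add l (rr a c) (rr b c).

(** (G, iota) is the group G(X, r0) = < X | x y = z t whenever r0(x,y) = (z,t) >,
    characterised by its universal property. *)
Definition satisfies_rels {X : Type} (l rr : X -> X -> X) {H : Grp} (f : X -> H) : Prop :=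
  forall x y, gmul (f x) (f y) = gmul (f (l x y)) (f (rr x y)).

Definition IsStructureGroup {X : Type} (l rr : X -> X -> X) {G : Grp} (iota : X -> G) : Prop :=
  satisfies_rels l rr iota /\
  forall (H : Grp) (f : X -> H), satisfies_rels l rr f ->
    exists phi : G -> H, is_hom phi /\ (forall x, phi (iota x) = f x) /\
      (forall psi : G -> H, is_hom psi -> (forall x, psi (iota x) = f x) ->
         forall g, psi g = phi g).

(* Main.v *)
Require Import Defs.
From Stdlib Require Import ProofIrrelevance Setoid.
Set Implicit Arguments.

Lemma mA {G : Grp} (a b c : G) : gmul a (gmul b c) = gmul (gmul a b) c.
Proof. exact (g_assoc (gax G) a b c). Qed.
Lemma m1l {G : Grp} (a : G) : gmul gone a = a.
Proof. exact (g_mul1l (gax G) a). Qed.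
Lemma m1r {G : Grp} (a : G) : gmul a gone = a.
Proof. exact (g_mul1r (gax G) a). Qed.
Lemma mVl {G : Grp} (a : G) : gmul (ginv a) a = gone.
Proof. exact (g_mulVl (gax G) a). Qed.
Lemma mVr {G : Grp} (a : G) : gmul a (ginv a) = gone.
Proof. exact (g_mulVr (gax G) a). Qed.

Lemma mcancl {G : Grp} (a b c : G) : gmul a b = gmul a c -> b = c.
Proof.
  intro H. transitivity (gmul (ginv a) (gmul a b)).
  - rewrite mA, mVl, m1l; reflexivity.
  - rewrite H, mA, mVl, m1l; reflexivity.
Qed.

Lemma inv_unique_r {G : Grp} (a b : G) : gmul a b = gone -> b = ginv a.
Proof. intro H. apply (mcancl a). rewrite H, mVr. reflexivity. Qed.

Lemma inv_inv {G : Grp} (a : G) : ginv (ginv a) = a.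
Proof. symmetry. apply inv_unique_r. apply mVl. Qed.

Lemma inv_mul {G : Grp} (a b : G) : ginv (gmul a b) = gmul (ginv b) (ginv a).
Proof.
  symmetry. apply inv_unique_r.
  rewrite <- mA, (mA b), mVr, m1l, mVr. reflexivity.
Qed.


Lemma sg_lact {G : Grp} (l rr : G -> G -> G) : IsSymGroup l rr ->
  forall a b u, l (gmul a b) u = l a (l b u).
Proof. intros H. apply H. Qed.
Lemma sg_l1u {G : Grp} (l rr : G -> G -> G) : IsSymGroup l rr -> forall u, l gone u = u.
Proof. intros H. apply H. Qed.
Lemma sg_la1 {G : Grp} (l rr : G -> G -> G) : IsSymGroup l rr -> forall a, l a gone = gone.
Proof. intros H. apply H. Qed.
Lemma sg_r1u {G : Grp} (l rr : G -> G -> G) : IsSymGroup l rr -> forall u, rr gone u = gone.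
Proof. intros H. apply H. Qed.
Lemma sg_ra1 {G : Grp} (l rr : G -> G -> G) : IsSymGroup l rr -> forall a, rr a gone = a.
Proof. intros H. apply H. Qed.
Lemma sg_rmul {G : Grp} (l rr : G -> G -> G) : IsSymGroup l rr ->
  forall a u v, rr a (gmul u v) = rr (rr a u) v.
Proof. intros H. apply H. Qed.
Lemma sg_lmul {G : Grp} (l rr : G -> G -> G) : IsSymGroup l rr ->
  forall a u v, l a (gmul u v) = gmul (l a u) (l (rr a u) v).
Proof. intros H. apply H. Qed.
Lemma sg_fac {G : Grp} (l rr : G -> G -> G) : IsSymGroup l rr ->
  forall u v, gmul u v = gmul (l u v) (rr u v).
Proof. intros H. apply H. Qed.
Lemma sg_inv1 {G : Grp} (l rr : G -> G -> G) : IsSymGroup l rr ->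
  forall a b, l (l a b) (rr a b) = a.
Proof.
  intros H a b. destruct H as [_ [Hi _]]. pose proof (Hi (a, b)) as E.
  unfold pairmap in E; simpl in E. injection E; auto.
Qed.

Lemma linvl {G : Grp} (l rr : G -> G -> G) : IsSymGroup l rr ->
  forall a u, l (ginv a) (l a u) = u.
Proof. intros H a u. rewrite <- (sg_lact H), mVl, (sg_l1u H). reflexivity. Qed.
Lemma linvr {G : Grp} (l rr : G -> G -> G) : IsSymGroup l rr ->
  forall a u, l a (l (ginv a) u) = u.
Proof. intros H a u. rewrite <- (sg_lact H), mVr, (sg_l1u H). reflexivity. Qed.

Lemma l_add {G : Grp} (l rr : G -> G -> G) : IsSymGroup l rr ->
  forall c a b, l c (brace_add l a b) = brace_add l (l c a) (l c b).
Proof.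
  intros H c a b. unfold brace_add. rewrite (sg_lmul H), <- !(sg_lact H).
  f_equal. f_equal.
  apply (mcancl (l c a)).
  rewrite mA, <- (sg_fac H), <- mA, mVr, m1r, mA, mVr, m1l. reflexivity.
Qed.

Lemma add_cancel {G : Grp} (l rr : G -> G -> G) : IsSymGroup l rr ->
  forall m s t, brace_add l m s = brace_add l m t -> s = t.
Proof.
  intros H m s t E. unfold brace_add in E. apply mcancl in E.
  rewrite <- (linvr H m s), E, (linvr H). reflexivity.
Qed.

Lemma add_comm {G : Grp} (l rr : G -> G -> G) : IsSymGroup l rr ->
  forall u w, brace_add l u w = brace_add l w u.
Proof.
  intros H u w. unfold brace_add.
  rewrite (sg_fac H u). rewrite (linvr H).
  f_equal.
  pose proof (sg_inv1 H u (l (ginv u) w)) as E.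
  rewrite (linvr H) in E.
  apply (f_equal (l (ginv w))) in E. rewrite (linvl H) in E. exact E.
Qed.

Lemma add_neg {G : Grp} (l rr : G -> G -> G) : IsSymGroup l rr ->
  forall a, brace_add l a (l a (ginv a)) = gone.
Proof. intros H a. unfold brace_add. rewrite (linvl H), mVr. reflexivity. Qed.

Lemma l_neg {G : Grp} (l rr : G -> G -> G) : IsSymGroup l rr ->
  forall h a, l h (l a (ginv a)) = l (l h a) (ginv (l h a)).
Proof.
  intros H h a. apply (add_cancel H (l h a)).
  rewrite <- (l_add H), (add_neg H), (sg_la1 H), (add_neg H). reflexivity.
Qed.

Lemma rrE {G : Grp} (l rr : G -> G -> G) : IsSymGroup l rr -> lri l rr ->
  forall y x, rr y x = l (ginv x) y.
Proof.
  intros H L y x. destruct (L x y) as [_ E].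
  rewrite <- E at 2. rewrite (linvl H). reflexivity.
Qed.

Lemma mu_equiv {G : Grp} (l rr : G -> G -> G) : IsSymGroup l rr -> lri l rr ->
  forall h a, l (ginv (l h a)) (l h a) = l h (l (ginv a) a).
Proof.
  intros H L h a. set (b := ginv h).
  pose proof (sg_inv1 H a b) as E1.
  assert (E2 : l a b = gmul (gmul a b) (ginv (rr a b))).
  { rewrite (sg_fac H a b), <- mA, mVr, m1r. reflexivity. }
  rewrite E2, !(sg_lact H) in E1.
  apply (f_equal (l (ginv a))) in E1. rewrite (linvl H) in E1.
  apply (f_equal (l (ginv b))) in E1. rewrite (linvl H) in E1.
  assert (E3 : rr a b = l h a).
  { rewrite (rrE H L). unfold b. rewrite inv_inv. reflexivity. }
  rewrite E3 in E1. rewrite E1. unfold b. rewrite inv_inv. reflexivity.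
Qed.

Lemma inv_pres {G : Grp} (l rr : G -> G -> G) : IsSymGroup l rr -> lri l rr ->
  forall h x, l h (ginv x) = ginv (l h x).
Proof.
  intros H L h x.
  assert (Am : forall y : G, brace_add l (ginv y) (l (ginv y) y) = gone).
  { intro y. unfold brace_add. rewrite inv_inv, (linvr H), mVl. reflexivity. }
  assert (E1 : brace_add l (l h (ginv x)) (l (ginv (l h x)) (l h x)) = gone).
  { rewrite (mu_equiv H L), <- (l_add H), Am, (sg_la1 H). reflexivity. }
  rewrite <- (Am (l h x)) in E1.
  rewrite (add_comm H (l h (ginv x))), (add_comm H (ginv (l h x))) in E1.
  exact (add_cancel H _ _ _ E1).
Qed.

Lemma part1 {G : Grp} (l rr : G -> G -> G) : IsSymGroup l rr -> lri l rr ->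
  Raut l rr /\
  (forall a u v : G, gmul (l (l v a) u) (l a v) = gmul (l a u) (l (rr a u) v)).
Proof.
  intros H L. split.
  - intros a b c. rewrite !(rrE H L). apply (l_add H).
  - intros a u v.
    pose proof (inv_pres H L a (gmul u v)) as E.
    rewrite (sg_lmul H a u v) in E.
    rewrite inv_mul, (sg_lmul H), !(inv_pres H L), (rrE H L (a) (ginv v)), inv_inv in E.
    rewrite <- inv_mul in E.
    apply (f_equal ginv) in E. rewrite !inv_inv in E. exact E.
Qed.

Inductive Sg {G : Grp} {X : Type} (iota : X -> G) : G -> Prop :=
| Sg_gen : forall x, Sg iota (iota x)
| Sg_one : Sg iota gone
| Sg_mul : forall a b, Sg iota a -> Sg iota b -> Sg iota (gmul a b)
| Sg_inv : forall a, Sg iota a -> Sg iota (ginv a).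

Lemma sig_ext {G : Grp} {P : G -> Prop} (a b : {g : G | P g}) :
  proj1_sig a = proj1_sig b -> a = b.
Proof.
  destruct a as [a pa], b as [b pb]; simpl; intros ->. f_equal. apply proof_irrelevance.
Qed.

Definition sub_mul {G : Grp} {X : Type} (iota : X -> G) (a b : {g : G | Sg iota g})
  : {g : G | Sg iota g} :=
  exist _ (gmul (proj1_sig a) (proj1_sig b)) (Sg_mul (proj2_sig a) (proj2_sig b)).
Definition sub_one {G : Grp} {X : Type} (iota : X -> G) : {g : G | Sg iota g} :=
  exist _ gone (Sg_one iota).
Definition sub_inv {G : Grp} {X : Type} (iota : X -> G) (a : {g : G | Sg iota g})
  : {g : G | Sg iota g} :=
  exist _ (ginv (proj1_sig a)) (Sg_inv (proj2_sig a)).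

Lemma sub_isgroup {G : Grp} {X : Type} (iota : X -> G) :
  IsGroup (@sub_mul G X iota) (@sub_one G X iota) (@sub_inv G X iota).
Proof.
  constructor; intros; apply sig_ext; simpl.
  - apply mA.
  - apply m1l.
  - apply m1r.
  - apply mVl.
  - apply mVr.
Qed.

Definition subG {G : Grp} {X : Type} (iota : X -> G) : Grp :=
  {| gcar := {g : G | Sg iota g}; gmul := @sub_mul G X iota; gone := @sub_one G X iota;
     ginv := @sub_inv G X iota; gax := sub_isgroup iota |}.

Lemma gen_all {X : Type} (l0 rr0 : X -> X -> X) {G : Grp} (iota : X -> G) :
  IsStructureGroup l0 rr0 iota -> forall g, Sg iota g.
Proof.
  intros [Hrel Hu] g.
  destruct (Hu (subG iota) (fun x => exist _ (iota x) (Sg_gen iota x))) as [phi [Hphi [Hphix _]]].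
  { intros x y. apply sig_ext. simpl. apply Hrel. }
  destruct (Hu G iota Hrel) as [phi0 [_ [_ Huniq]]].
  pose proof (Huniq (fun g => g) (fun a b => eq_refl) (fun x => eq_refl) g) as e1.
  assert (Hh : is_hom (fun g => proj1_sig (phi g))).
  { intros a b. rewrite Hphi. reflexivity. }
  assert (Hx : forall x, proj1_sig (phi (iota x)) = iota x).
  { intro x. rewrite Hphix. reflexivity. }
  pose proof (Huniq _ Hh Hx g) as e2. simpl in e1, e2.
  rewrite e1, <- e2. apply proj2_sig.
Qed.

Inductive Ag {G : Grp} (l : G -> G -> G) {X : Type} (iota : X -> G) : G -> Prop :=
| Ag_gen : forall x, Ag l iota (iota x)
| Ag_one : Ag l iota gone
| Ag_add : forall a b, Ag l iota a -> Ag l iota b -> Ag l iota (brace_add l a b)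
| Ag_neg : forall a, Ag l iota a -> Ag l iota (l a (ginv a)).

Lemma part2 (X : Type) (l0 rr0 : X -> X -> X) (G : Grp) (iota : X -> G)
          (l rr : G -> G -> G) :
     lri l0 rr0 ->
     IsStructureGroup l0 rr0 iota ->
     IsSymGroup l rr ->
     (forall x y : X, l (iota x) (iota y) = iota (l0 x y) /\
                      rr (iota x) (iota y) = iota (rr0 x y)) ->
     Raut l rr -> lri l rr.
Proof.
  intros Hl HS H Hc HR.
  pose proof (gen_all HS) as gen.
  assert (pres : forall g, Sg iota g ->
            (forall x, exists y, l g (iota x) = iota y) /\
            (forall x, exists y, l (ginv g) (iota x) = iota y)).
  { intros g Sgg. induction Sgg as [z| |a b _ [IA1 IA2] _ [IB1 IB2]|a _ [IA1 IA2]].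
    - split; intro x.
      + exists (l0 z x). apply Hc.
      + exists (rr0 x z). destruct (Hl z x) as [_ E].
        rewrite <- E at 1. rewrite <- (proj1 (Hc z (rr0 x z))), (linvl H). reflexivity.
    - split; intro x; exists x.
      + apply (sg_l1u H).
      + assert (E : ginv (@gone G) = gone) by (symmetry; apply inv_unique_r; apply m1l).
        rewrite E. apply (sg_l1u H).
    - split; intro x.
      + destruct (IB1 x) as [y Ey]. destruct (IA1 y) as [z Ez].
        exists z. rewrite (sg_lact H), Ey, Ez. reflexivity.
      + destruct (IA2 x) as [y Ey]. destruct (IB2 y) as [z Ez].
        exists z. rewrite inv_mul, (sg_lact H), Ey, Ez. reflexivity.
    - split; intro x.
      + apply IA2.
      + rewrite inv_inv. apply IA1. }
  assert (A_l : forall h a, Ag l iota a -> Ag l iota (l h a)).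
  { intros h a Aa. induction Aa as [x| |a b _ IA _ IB|a _ IA].
    - destruct (proj1 (pres h (gen h)) x) as [y Ey]. rewrite Ey. constructor.
    - rewrite (sg_la1 H). constructor.
    - rewrite (l_add H). constructor; assumption.
    - rewrite (l_neg H). constructor; assumption. }
  assert (allA : forall g, Ag l iota g).
  { intro g. induction (gen g) as [x| |a b _ IA _ IB|a _ IA].
    - constructor.
    - constructor.
    - replace (gmul a b) with (brace_add l a (l a b)).
      + constructor; [assumption | apply A_l; assumption].
      + unfold brace_add. rewrite (linvl H). reflexivity.
    - rewrite <- (linvl H a (ginv a)). apply A_l. constructor. assumption. }
  assert (Q : forall y, Ag l iota y -> forall x, l (iota x) (rr y (iota x)) = y).
  { intros y Ay. induction Ay as [z| |a b _ IA _ IB|a _ IA]; intro x.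
    - rewrite (proj2 (Hc z x)), (proj1 (Hc x (rr0 z x))). f_equal. apply Hl.
    - rewrite (sg_r1u H), (sg_la1 H). reflexivity.
    - rewrite HR, (l_add H), IA, IB. reflexivity.
    - assert (E : rr (l a (ginv a)) (iota x) = l (rr a (iota x)) (ginv (rr a (iota x)))).
      { apply (add_cancel H (rr a (iota x))).
        rewrite <- HR, (add_neg H), (sg_r1u H), (add_neg H). reflexivity. }
      rewrite E, (l_neg H), IA. reflexivity. }
  assert (M : forall x, Sg iota x -> forall y, l x (rr y x) = y).
  { intros x Sx. induction Sx as [z| |a b _ IA _ IB|a _ IA]; intro y.
    - apply Q, allA.
    - rewrite (sg_ra1 H), (sg_l1u H). reflexivity.
    - rewrite (sg_lact H), (sg_rmul H), IB, IA. reflexivity.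
    - set (z := rr y (ginv a)).
      assert (Ez : rr z a = y).
      { unfold z. rewrite <- (sg_rmul H), mVl, (sg_ra1 H). reflexivity. }
      pose proof (IA z) as E. rewrite Ez in E. rewrite <- E, (linvl H). reflexivity. }
  intros x y. split.
  - pose proof (M x (gen x) (l x y)) as E.
    apply (f_equal (l (ginv x))) in E. rewrite !(linvl H) in E. exact E.
  - apply M, gen.
Qed.

Theorem mainTheorem13 :
  (* (1) *)
  (forall (G : Grp) (l rr : G -> G -> G),
     IsSymGroup l rr -> lri l rr ->
     Raut l rr /\
     (forall a u v : G,
        gmul (l (l v a) u) (l a v) = gmul (l a u) (l (rr a u) v))) /\
  (* (2) *)
  (forall (X : Type) (l0 rr0 : X -> X -> X) (G : Grp) (iota : X -> G)
          (l rr : G -> G -> G),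
     IsSymSet l0 rr0 -> lri l0 rr0 ->
     IsStructureGroup l0 rr0 iota ->
     IsSymGroup l rr ->
     (forall x y : X, l (iota x) (iota y) = iota (l0 x y) /\
                      rr (iota x) (iota y) = iota (rr0 x y)) ->
     (Raut l rr -> lri l rr) /\ (lri l rr <-> Raut l rr)).
Proof.
  split.
  - intros G l rr H L. apply part1; assumption.
  - intros X l0 rr0 G iota l rr _ Hl HS H Hc.
    assert (P : Raut l rr -> lri l rr) by (apply (part2 Hl HS H Hc)).
    split; [exact P | split; [intro L; apply (part1 H L) | exact P]].
Qed.
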